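(* Let $L\subseteq\mathbb{R}^n$ be a cocompact lattice and $O\subseteq\mathbb{R}^n$ a nonempty open subset such that $v_1+v_2\in O$ for all $v_1,v_2\in O$. Then $O\cap L\neq\emptyset$. *)

(* Defs.v *)
From Stdlib Require Import Reals.
From Stdlib Require Fin.
Open Scope R_scope.

Definition vec (n : nat) : Type := Fin.t n -> R.

Definition vzero {n : nat} : vec n := fun _ => 0.
Definition vadd {n : nat} (x y : vec n) : vec n := fun i => x i + y i.
Definition vsub {n : nat} (x y : vec n) : vec n := fun i => x i - y i.

(* Open subsets of R^n (product topology = sup-norm topology). *)
Definition is_open {n : nat} (O : vec n -> Prop) : Prop :=
  forall x, O x -> exists e, 0 < e /\
    forall y : vec n, (forall i, Rabs (y i - x i) < e) -> O y.

Definition is_subgroup {n : nat} (L : vec n -> Prop) : Prop :=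
  L vzero /\ forall x y, L x -> L y -> L (vsub x y).

Definition is_discrete {n : nat} (L : vec n -> Prop) : Prop :=
  forall l, L l -> exists e, 0 < e /\
    forall x, L x -> (forall i, Rabs (x i - l i) < e) -> x = l.

(* R^n / L is compact: there is a compact set K (here a closed sup-norm ball
   of radius M, which is compact by Heine-Borel) with K + L = R^n. *)
Definition is_cocompact {n : nat} (L : vec n -> Prop) : Prop :=
  exists M : R, forall x : vec n, exists l, L l /\
    forall i, Rabs (x i - l i) <= M.

Definition cocompact_lattice {n : nat} (L : vec n -> Prop) : Prop :=
  is_subgroup L /\ is_discrete L /\ is_cocompact L.

(* Main.v *)
Require Import Defs.
From Stdlib Require Import Reals Lra FunctionalExtensionality.
From Stdlib Require Fin.
Open Scope R_scope.

Lemma scale_in {n : nat} (O : vec n -> Prop) :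
  (forall v1 v2, O v1 -> O v2 -> O (vadd v1 v2)) ->
  forall z, O z -> forall k : nat, O (fun i => INR (S k) * z i).
Proof.
  intros Hadd z Hz k; induction k as [|k IH].
  - replace (fun i => INR 1 * z i) with z; auto.
    apply functional_extensionality; intro i; simpl; ring.
  - replace (fun i => INR (S (S k)) * z i) with (vadd (fun i => INR (S k) * z i) z).
    + apply Hadd; auto.
    + apply functional_extensionality; intro i; unfold vadd.
      rewrite (S_INR (S k)); ring.
Qed.

Theorem mainTheorem13 (n : nat) (L O : vec n -> Prop) :
  cocompact_lattice L ->
  is_open O ->
  (exists x, O x) ->
  (forall v1 v2, O v1 -> O v2 -> O (vadd v1 v2)) ->
  exists v, O v /\ L v.
Proof.
  intros [_ [_ [M HM]]] Hop [x Hx] Hadd.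
  destruct (Hop x Hx) as [e [He Hball]].
  destruct (INR_unbounded (M / e)) as [k Hk].
  set (N := INR (S k)).
  assert (HN : N = INR k + 1) by (unfold N; apply S_INR).
  assert (Hk0 : 0 <= INR k) by apply pos_INR.
  assert (HNe : M < N * e).
  { assert (M / e * e = M) by (field; lra).
    assert (M / e * e < INR k * e) by (apply Rmult_lt_compat_r; lra).
    nra. }
  destruct (HM (fun i => N * x i)) as [l [Hl Hli]].
  exists l; split; auto.
  set (z := fun i => l i / N).
  assert (Oz : O z).
  { apply Hball; intro i; unfold z.
    specialize (Hli i).
    replace (l i / N - x i) with (- (N * x i - l i) / N) by (field; lra).
    unfold Rdiv; rewrite Rabs_mult, Rabs_Ropp, Rabs_inv, (Rabs_right N) by lra.
    apply (Rmult_lt_reg_r N); [lra|].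
    rewrite Rmult_assoc, Rinv_l by lra. lra. }
  replace l with (fun i => INR (S k) * z i).
  - apply scale_in; auto.
  - apply functional_extensionality; intro i; unfold z; fold N; field; lra.
Qed.
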